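(* Let $D$ be a squarefree integer, not a perfect square, with $D\equiv 1\pmod 8$, and let $D=\pm\prod_{i=1}^r p_i$ with distinct primes $p_1<\cdots<p_r$. Define \[ c_{\mathrm{loc}}:=4\prod_{i=1}^r\sum_{l=1}^{\infty}\frac{|\mathcal{R}_l^*(p_i)|}{p_i^{2(8l+1)}}. \] Then $c_{\mathrm{loc}}\geq \dfrac{4}{D^2}$.
   Context: $Q_1(\mathbf{t})=t_2^2-Dt_3^2-t_0t_1$, $Q_2(\mathbf{t})=t_2^2-Dt_4^2-(t_0+At_1)(t_0+Bt_1)$, $G(A,B)=A^2-2AB+B^2-2A-2B+1$. For a prime $p$ and $l\geq 1$, $\mathcal{R}_l(p)$ is the set of pairs of residue classes $(A,B)$ modulo $p^{8l+1}$ such that $p^{l+1}$ divides none of $A,B,A-B,G(A,B)$ and $Q_1(\mathbf{t})\equiv Q_2(\mathbf{t})\equiv 0\pmod{p^{8l+1}}$ has a solution $\mathbf{t}\in(\mathbb{Z}/p^{8l+1}\mathbb{Z})^5$ with components not all divisible by $p$. Set $\mathcal{R}_0(p)=\emptyset$, and for $l\geq 1$ let $\mathcal{R}_l^*(p)\subset\mathcal{R}_l(p)$ be the set of $(A,B)\in\mathcal{R}_l(p)$ whose reduction modulo $p^{8(l-1)+1}$ is not in $\mathcal{R}_{l-1}(p)$. *)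

(* Defs.v *)
From mathcomp Require Import all_boot all_order all_algebra.
From mathcomp Require Import all_classical all_reals all_analysis.
Set Implicit Arguments. Unset Strict Implicit. Unset Printing Implicit Defensive.
Import Order.TTheory GRing.Theory Num.Theory.
Local Open Scope ring_scope.

Definition Q1 (D : int) (t : 'I_5 -> int) : int :=
  t (inord 2) ^+ 2 - D * t (inord 3) ^+ 2 - t (inord 0) * t (inord 1).
Definition Q2 (D A B : int) (t : 'I_5 -> int) : int :=
  t (inord 2) ^+ 2 - D * t (inord 4) ^+ 2
  - (t (inord 0) + A * t (inord 1)) * (t (inord 0) + B * t (inord 1)).
Definition G (A B : int) : int :=
  A ^+ 2 - 2 * A * B + B ^+ 2 - 2 * A - 2 * B + 1.

Definition modl (p l : nat) : nat := (p ^ (8 * l + 1))%N.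

(* (A,B) (integer representatives of residue classes mod p^(8l+1)) lies in
   R_l(p); for l = 0 this is false, i.e. R_0(p) is empty. *)
Definition inR (D : int) (p l : nat) (A B : int) : bool :=
  (0 < l)%N &&
  [&& ~~ ((p ^ l.+1)%:Z %| A)%Z, ~~ ((p ^ l.+1)%:Z %| B)%Z,
      ~~ ((p ^ l.+1)%:Z %| A - B)%Z, ~~ ((p ^ l.+1)%:Z %| G A B)%Z &
      [exists t : {ffun 'I_5 -> 'I_(modl p l)},
         [&& [exists i, ~~ (p %| t i)%N],
             ((modl p l)%:Z %| Q1 D (fun i => (t i : nat)%:Z))%Z &
             ((modl p l)%:Z %| Q2 D A B (fun i => (t i : nat)%:Z))%Z]]].

Definition Rset (D : int) (p l : nat) : {set 'I_(modl p l) * 'I_(modl p l)} :=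
  [set x : 'I_(modl p l) * 'I_(modl p l) | inR D p l (x.1 : nat)%:Z (x.2 : nat)%:Z].

Definition Rstar (D : int) (p l : nat) : {set 'I_(modl p l) * 'I_(modl p l)} :=
  [set x : 'I_(modl p l) * 'I_(modl p l) | inR D p l (x.1 : nat)%:Z (x.2 : nat)%:Z &&
           ~~ inR D p l.-1 ((x.1 : nat) %% modl p l.-1)%N%:Z
                           ((x.2 : nat) %% modl p l.-1)%N%:Z].

Definition squarefree (D : int) : Prop :=
  D != 0 /\ forall p : nat, prime p -> ~~ ((p ^ 2)%N %| `|D|)%N.

Definition local_sum (R : realType) (D : int) (p : nat) : \bar R :=
  (\sum_(1 <= l <oo) ((#|Rstar D p l|%:R / (p ^ (2 * (8 * l + 1)))%:R : R)%:E))%E.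

Definition c_loc (R : realType) (D : int) : \bar R :=
  (4%:E * \prod_(p <- primes `|D|) local_sum R D p)%E.

(* Main.v *)
Require Import Defs.
From mathcomp Require Import all_boot all_order all_algebra.
From mathcomp Require Import all_classical all_reals all_analysis.
From mathcomp Require Import ring lra zify.
Import Order.TTheory GRing.Theory Num.Theory.
Local Open Scope ring_scope.
Set Implicit Arguments. Unset Strict Implicit. Unset Printing Implicit Defensive.

Lemma cop_p (p : nat) (m : int) : prime p -> ~~ (p%:Z %| m)%Z -> coprimez m (p%:Z).
Proof.
move=> pp hm; rewrite coprimezE /= coprime_sym prime_coprime //.
Qed.

Lemma ex_inv (p : nat) (m : int) (k : nat) : prime p -> ~~ (p%:Z %| m)%Z ->
  exists u v : int, u * m + v * (p%:Z) ^+ k.+1 = 1.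
Proof.
move=> pp hm; have := cop_p pp hm.
rewrite -(@coprimez_pexpr k.+1 m (p%:Z) (ltn0Sn k)) => /coprimezP [[u v] /= h].
by exists u, v.
Qed.

Definition Spoly (X : int) : int := (2^+15) + (2^+14) * X^+1 - (2^+12) * X^+2 + (2^+11) * X^+3 - (2^+8 * 5) * X^+4 + (2^+7 * 7) * X^+5 - (2^+5 * 3 * 7) * X^+6 + (2^+4 * 3 * 11) * X^+7 - (3 * 11 * 13) * X^+8.
Definition Rpoly (X : int) : int := - (2^+15 * 5 * 11 * 13) + (2^+13 * 7 * 11 * 13) * X^+1 - (2^+12 * 3 * 3 * 3 * 3 * 13) * X^+2 + (2^+9 * 3 * 5 * 5 * 5 * 13) * X^+3 - (2^+8 * 3 * 5 * 5 * 7 * 11) * X^+4 + (2^+6 * 3 * 3 * 3 * 3 * 3 * 5 * 11) * X^+5 - (2^+5 * 3 * 3 * 11 * 11 * 13) * X^+6 + (3 * 3 * 11 * 11 * 13 * 13) * X^+7.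
Lemma Spoly_sq X : Spoly X ^+ 2 = ((2^+15 : int)) ^+ 2 * (1+X) + X^+9 * Rpoly X.
Proof. rewrite /Spoly /Rpoly; ring. Qed.

Lemma nd2 (p : nat) (d : int) : prime p -> (2 < p)%N -> ~~ (p%:Z %| d)%Z -> ~~ (p%:Z %| 2 * d)%Z.
Proof.
move=> pp p2; rewrite !dvdzE abszM /= Euclid_dvdM // => /negbTE ->; rewrite orbF.
apply/negP => /(dvdn_leq (isT : (0 < 2)%N)); lia.
Qed.

Lemma nc (p : nat) : prime p -> (2 < p)%N -> ~~ (p%:Z %| (2^+15 : int))%Z.
Proof.
move=> pp p2; rewrite dvdzE abszX (_ : `|2|%N = 2%N) // Euclid_dvdX // andbT.
apply/negP => /(dvdn_leq (isT : (0 < 2)%N)); lia.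
Qed.

Lemma ex_t (p : nat) (d A B W : int) : prime p -> (2 < p)%N -> ~~ (p%:Z %| d)%Z ->
  (1 + A) * (1 + B) = 1 + p%:Z * W ->
  exists t : 'I_5 -> int, [/\ t (inord 1) = 1,
     ((p%:Z)^+9 %| Q1 (p%:Z*d) t)%Z & ((p%:Z)^+9 %| Q2 (p%:Z*d) A B t)%Z].
Proof.
move=> pp p2 hd hW.
have [u [v huv]] := @ex_inv p (2*d) 7 pp (nd2 pp p2 hd).
have [u2 [v2 huv2]] := @ex_inv p (2^+15 : int) 8 pp (nc pp p2).
set pz := p%:Z in huv huv2 hW *.
set tau := u * (W + d).
set X := pz * (d * tau^+2).
set t2 := u2 * Spoly X.
have e2 : u2 * (2^+15 : int) = 1 - v2 * pz^+9 by rewrite -[X in X - _]huv2; ring.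
have Ht2 : t2 ^+ 2 = (1 - v2 * pz^+9)^+2 * (1 + X) + u2^+2 * X^+9 * Rpoly X.
  by rewrite -e2 /t2 exprMn Spoly_sq; ring.
have Htau : 2 * d * tau = (1 - v * pz^+8) * (W + d).
  by rewrite -[X in X - _]huv /tau; ring.
have HQ1 : t2 ^+ 2 - pz * d * tau ^+ 2 - 1 =
   pz ^+ 9 * ((1+X)*(-2*v2 + v2^+2 * pz^+9) + u2^+2 * (d*tau^+2)^+9 * Rpoly X).
  by rewrite Ht2 /X; ring.
exists (fun i : 'I_5 => if val i == 0%N then 1 else if val i == 1%N then 1
         else if val i == 2%N then t2 else if val i == 3%N then tau else tau - 1).
rewrite /Q1 /Q2 /= !inordK //=; split => //.
  apply/dvdzP; eexists; rewrite mulr1 HQ1 mulrC; reflexivity.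
apply/dvdzP; exists (((1+X)*(-2*v2 + v2^+2 * pz^+9) + u2^+2 * (d*tau^+2)^+9 * Rpoly X) - v * (W + d)).
have -> : (1 + A * 1) * (1 + B * 1) = 1 + pz * W by rewrite !mulr1.
have -> : t2 ^+ 2 - pz * d * (tau - 1) ^+ 2 - (1 + pz * W) =
   (t2 ^+ 2 - pz * d * tau ^+ 2 - 1) + pz * (2 * d * tau) - pz * d - pz * W by ring.
rewrite HQ1 Htau; ring.
Qed.

Lemma Q1_compat D (f k : 'I_5 -> int) (M : int) :
  Q1 D (fun i => f i - M * k i) = Q1 D f + M * (
   (-2 * k (inord 2) * f (inord 2) + M * k (inord 2) ^+ 2)
   - D * (-2 * k (inord 3) * f (inord 3) + M * k (inord 3) ^+ 2)
   - (- k (inord 0) * f (inord 1) - k (inord 1) * f (inord 0) + M * k (inord 0) * k (inord 1))).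
Proof. rewrite /Q1; ring. Qed.

Lemma Q2_compat D A B (f k : 'I_5 -> int) (M : int) :
  Q2 D A B (fun i => f i - M * k i) = Q2 D A B f + M * (
   (-2 * k (inord 2) * f (inord 2) + M * k (inord 2) ^+ 2)
   - D * (-2 * k (inord 4) * f (inord 4) + M * k (inord 4) ^+ 2)
   - (- (k (inord 0) + A * k (inord 1)) * (f (inord 0) + B * f (inord 1))
      - (k (inord 0) + B * k (inord 1)) * (f (inord 0) + A * f (inord 1))
      + M * (k (inord 0) + A * k (inord 1)) * (k (inord 0) + B * k (inord 1)))).
Proof. rewrite /Q2; ring. Qed.

Lemma Q1_ext D (f g : 'I_5 -> int) : (forall i, f i = g i) -> Q1 D f = Q1 D g.
Proof. by move=> h; rewrite /Q1 !h. Qed.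
Lemma Q2_ext D A B (f g : 'I_5 -> int) : (forall i, f i = g i) -> Q2 D A B f = Q2 D A B g.
Proof. by move=> h; rewrite /Q2 !h. Qed.

Lemma absz_mod_lt (x : int) (M : nat) : (0 < M)%N -> (`|(x %% M%:Z)%Z| < M)%N.
Proof.
move=> hM; have h0 := @modz_ge0 x M%:Z; have h1 := @ltz_pmod x M%:Z.
have : (0 <= (x %% M%:Z)%Z < M%:Z) by rewrite h0 ?h1 //; lia.
lia.
Qed.

Lemma absz_mod_eq (x : int) (M : nat) : (0 < M)%N -> (`|(x %% M%:Z)%Z|%N)%:Z = (x %% M%:Z)%Z.
Proof. move=> hM; rewrite gez0_abs // modz_ge0 //; lia. Qed.

Lemma modlE p : (modl p 1)%:Z = (p%:Z) ^+ 9.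
Proof. by rewrite /modl -natz natrX natz. Qed.

Lemma ex_tf (p : nat) (d A B W : int) : prime p -> (2 < p)%N -> ~~ (p%:Z %| d)%Z ->
  (1 + A) * (1 + B) = 1 + p%:Z * W ->
  [exists t : {ffun 'I_5 -> 'I_(modl p 1)},
         [&& [exists i, ~~ (p %| t i)%N],
             ((modl p 1)%:Z %| Q1 (p%:Z * d) (fun i => (t i : nat)%:Z))%Z &
             ((modl p 1)%:Z %| Q2 (p%:Z * d) A B (fun i => (t i : nat)%:Z))%Z]].
Proof.
move=> pp p2 hd hW.
have [t [t1 h1 h2]] := ex_t pp p2 hd hW.
set M := modl p 1.
have HM : (1 < M)%N.
  rewrite /M /modl; have : (1 < p)%N by lia.
  by move=> h; rewrite -{1}(expn0 p) ltn_exp2l.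
have HM0 : (0 < M)%N by lia.
apply/existsP; exists [ffun i => Ordinal (absz_mod_lt (t i) HM0)].
have Ef : forall i, ((([ffun i => Ordinal (absz_mod_lt (t i) HM0)] : {ffun 'I_5 -> 'I_M}) i : nat)%:Z)
     = t i - M%:Z * (t i %/ M%:Z)%Z.
  move=> i; rewrite ffunE /= absz_mod_eq //.
  by rewrite {2}(divz_eq (t i) M%:Z); ring.
apply/and3P; split.
- apply/existsP; exists (inord 1); rewrite ffunE /= t1.
  rewrite modz_small; last by apply/andP; split => //; lia.
  by apply/negP => /(dvdn_leq (ltn0Sn 0)); lia.
- rewrite (Q1_ext _ Ef) Q1_compat; apply: rpredD; last exact: dvdz_mulr.
  by rewrite /M modlE.
- rewrite (Q2_ext _ _ _ Ef) Q2_compat; apply: rpredD; last exact: dvdz_mulr.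
  by rewrite /M modlE.
Qed.

Lemma ndv (q c : nat) (X Y : int) : (0 < c < q)%N ->
  (X = c%:Z + q%:Z * Y \/ X = - c%:Z + q%:Z * Y) -> ~~ (q%:Z %| X)%Z.
Proof.
move=> hc hX; apply/negP => hd.
have : (q%:Z %| c%:Z)%Z.
  case: hX => hX.
    rewrite (_ : c%:Z = X - q%:Z * Y); last by rewrite hX; ring.
    by apply: rpredB => //; apply: dvdz_mulr.
  rewrite (_ : c%:Z = - (X - q%:Z * Y)); last by rewrite hX; ring.
  by rewrite dvdzE abszN -dvdzE; apply: rpredB => //; apply: dvdz_mulr.
rewrite dvdzE /= => /(dvdn_leq); lia.
Qed.

Lemma ndv2 (p : nat) X : ~~ (p%:Z %| X)%Z -> ~~ ((p^2)%:Z %| X)%Z.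
Proof.
apply: contra => h; apply: dvdz_trans h.
by rewrite dvdzE /= expnS dvdn_mulr.
Qed.

Lemma inR_of (p : nat) (d A B W : int) : prime p -> (2 < p)%N -> ~~ (p%:Z %| d)%Z ->
  (1 + A) * (1 + B) = 1 + p%:Z * W ->
  ~~ ((p^2)%:Z %| A)%Z -> ~~ ((p^2)%:Z %| B)%Z -> ~~ ((p^2)%:Z %| A - B)%Z ->
  ~~ ((p^2)%:Z %| G A B)%Z -> inR (p%:Z * d) p 1 A B.
Proof.
move=> pp p2 hd hW h1 h2 h3 h4.
rewrite /inR ltn0Sn /=; apply/and5P; split => //.
exact: ex_tf pp p2 hd hW.
Qed.

Lemma inR_sym (D : int) p l A B : inR D p l A B -> inR D p l B A.
Proof.
rewrite /inR => /andP [-> /and5P [h1 h2 h3 h4 /existsP [t /and3P [t1 t2 t3]]]].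
apply/andP; split => //; apply/and5P; split => //.
- by rewrite -opprB dvdzE abszN.
- by rewrite (_ : G B A = G A B) //; rewrite /G; ring.
- apply/existsP; exists t; rewrite t1 t2 /=.
  by rewrite (_ : Q2 D B A _ = Q2 D A B (fun i => (t i : nat)%:Z)) //; rewrite /Q2; ring.
Qed.

Lemma cls5 (p k : nat) (d j1 j2 : int) : prime p -> p = (2 * k + 5)%N -> ~~ (p%:Z %| d)%Z ->
  inR (p%:Z * d) p 1 (1 + p%:Z * j1) ((k + 2)%N%:Z + p%:Z * j2).
Proof.
move=> pp hp hd.
have p2 : (2 < p)%N by lia.
have hpz : p%:Z = 2 * k%:Z + 5 by rewrite hp PoszD PoszM.
have hk2 : (k + 2)%N%:Z = k%:Z + 2 by rewrite PoszD.
apply: (@inR_of p d _ _ (1 + 2 * j2 + j1 * (k%:Z + 3) + p%:Z * j1 * j2)) => //.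
- rewrite hk2 hpz; ring.
- apply: ndv2; apply: (@ndv p 1 _ j1); [lia | by left].
- apply: ndv2; apply: (@ndv p (k+2) _ j2); [lia | by left].
- apply: ndv2; apply: (@ndv p (k+1) _ (j1 - j2)); first lia.
  by right; rewrite hk2 PoszD; ring.
- apply: ndv2; apply/negP => hG.
  set A := 1 + p%:Z * j1. set B := (k + 2)%N%:Z + p%:Z * j2.
  have e : 4 * G A B = 9 + p%:Z * ((2 * (k%:Z + 2) - 9) + 4 * (2 * (1 - (k%:Z+2)) * (j1 - j2)
             + p%:Z * (j1 - j2)^+2 - 2 * (j1 + j2))).
    rewrite /A /B /G hk2 {1 2 3 4 5 6 7 8}hpz; ring.
  have h9 : (p%:Z %| (9)%R)%Z.
    rewrite (_ : 9 = 4 * G A B - p%:Z * ((2 * (k%:Z + 2) - 9) + 4 * (2 * (1 - (k%:Z+2)) * (j1 - j2)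
             + p%:Z * (j1 - j2)^+2 - 2 * (j1 + j2)))); last by rewrite e; ring.
    by apply: rpredB; [apply: dvdz_mull | apply: dvdz_mulr].
  move: h9; rewrite dvdzE (_ : `|9|%N = 3 ^ 2)%N // Euclid_dvdX // andbT.
  move/(dvdn_leq (ltn0Sn 2)); lia.
Qed.

Lemma cls3 (d j1 j2 : int) (a b : nat) : ~~ (3%:Z %| d)%Z ->
  (a, b) \in [:: (3, 6); (6, 3); (1, 7); (7, 1); (4, 7); (7, 4)]%N ->
  inR (3%:Z * d) 3 1 (a%:Z + 9%:Z * j1) (b%:Z + 9%:Z * j2).
Proof.
move=> hd hab.
have G9 : forall (a b j1 j2 : int), G (a + 9%:Z * j1) (b + 9%:Z * j2) =
   G a b + 9%:Z * (2 * (a - b) * (j1 - j2) + 9%:Z * (j1 - j2) ^+ 2 - 2 * (j1 + j2)).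
  by move=> x y z w; rewrite /G; ring.
have pp : prime 3 by [].
have p2 : (2 < 3)%N by [].
have key : forall (a b : nat) (j1 j2 : int), (a, b) \in [:: (3, 6); (1, 7); (4, 7)]%N ->
   inR (3%:Z * d) 3 1 (a%:Z + 9%:Z * j1) (b%:Z + 9%:Z * j2).
  clear a b hab j1 j2 => a b j1 j2; rewrite !inE => /or3P [] /eqP [-> ->].
  - apply: (@inR_of 3 d _ _ (9%:Z + 12%:Z * j2 + 21%:Z * j1 + 27%:Z * j1 * j2)) => //.
    + ring.
    + by apply: (@ndv 9 3 _ j1) => //; left; ring.
    + by apply: (@ndv 9 6 _ j2) => //; left; ring.
    + by apply: (@ndv 9 3 _ (j1 - j2)) => //; right; ring.
    + apply: (@ndv 9 1 _ (2 * (3%:Z - 6%:Z) * (j1 - j2) + 9%:Z * (j1 - j2) ^+ 2 - 2 * (j1 + j2) - 1)) => //.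
      by left; rewrite G9 /G; ring.
  - apply: (@inR_of 3 d _ _ (5%:Z + 6%:Z * j2 + 24%:Z * j1 + 27%:Z * j1 * j2)) => //.
    + ring.
    + by apply: (@ndv 9 1 _ j1) => //; left; ring.
    + by apply: (@ndv 9 7 _ j2) => //; left; ring.
    + by apply: (@ndv 9 6 _ (j1 - j2)) => //; right; ring.
    + apply: (@ndv 9 3 _ (2 * (1%:Z - 7%:Z) * (j1 - j2) + 9%:Z * (j1 - j2) ^+ 2 - 2 * (j1 + j2) + 2)) => //.
      by left; rewrite G9 /G; ring.
  - apply: (@inR_of 3 d _ _ (13%:Z + 15%:Z * j2 + 24%:Z * j1 + 27%:Z * j1 * j2)) => //.
    + ring.
    + by apply: (@ndv 9 4 _ j1) => //; left; ring.
    + by apply: (@ndv 9 7 _ j2) => //; left; ring.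
    + by apply: (@ndv 9 3 _ (j1 - j2)) => //; right; ring.
    + apply: (@ndv 9 6 _ (2 * (4%:Z - 7%:Z) * (j1 - j2) + 9%:Z * (j1 - j2) ^+ 2 - 2 * (j1 + j2) - 2)) => //.
      by left; rewrite G9 /G; ring.
move: hab; rewrite !inE => /orP [h|/orP [h|/orP [h|/orP [h|/orP [h|h]]]]].
- by apply: key; rewrite !inE h.
- by apply: inR_sym; move/eqP: h => [-> ->]; apply: key; rewrite !inE eqxx.
- by apply: key; rewrite !inE h orbT.
- by apply: inR_sym; move/eqP: h => [-> ->]; apply: key; rewrite !inE eqxx orbT.
- by apply: key; rewrite !inE h !orbT.
- by apply: inR_sym; move/eqP: h => [-> ->]; apply: key; rewrite !inE eqxx !orbT.
Qed.

Lemma count_lb (M n K : nat) (s : seq (nat * nat)) (S : {set 'I_M * 'I_M}) :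
  M = (n * K)%N -> uniq s -> all (fun ab => (ab.1 < n) && (ab.2 < n))%N s ->
  (forall ab j1 j2, ab \in s -> (j1 < K)%N -> (j2 < K)%N ->
     forall x : 'I_M * 'I_M, (x.1 : nat) = (ab.1 + n * j1)%N -> (x.2 : nat) = (ab.2 + n * j2)%N ->
     x \in S) ->
  (size s * K * K <= #|S|)%N.
Proof.
move=> hM us alls hS.
case: s us alls hS => [|ab0 s'] us alls hS; first by rewrite mul0n.
set s := ab0 :: s' in us alls hS *.
have [K0|Kpos] := posnP K; first by rewrite K0 muln0.
have npos : (0 < n)%N by move: alls => /= /andP [/andP [h _] _]; lia.
have HM : (0 < M)%N by rewrite hM muln_gt0 npos.
have lt1 : forall a j, (a < n)%N -> (j < K)%N -> (a + n * j < M)%N.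
  move=> a j ha hj; rewrite hM; apply: (@leq_trans (n * j.+1)).
    by rewrite mulnS ltn_add2r.
  by rewrite leq_mul2l hj orbT.
pose f (x : 'I_(size s) * 'I_K * 'I_K) : 'I_M * 'I_M :=
  (Ordinal (ltn_pmod ((nth (0,0)%N s x.1.1).1 + n * x.1.2) HM),
   Ordinal (ltn_pmod ((nth (0,0)%N s x.1.1).2 + n * x.2) HM)).
have nthlt : forall i : 'I_(size s), ((nth (0,0)%N s i).1 < n)%N && ((nth (0,0)%N s i).2 < n)%N.
  move=> i; move/allP: alls; apply; exact: mem_nth.
have modE : forall a j, (a < n)%N -> ((a + n * j) %% n = a)%N.
  by move=> a j ha; rewrite addnC mulnC modnMDl modn_small.
have divE : forall a j, (a < n)%N -> ((a + n * j) %/ n = j)%N.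
  by move=> a j ha; rewrite addnC mulnC divnMDl // divn_small // addn0.
have finj : injective f.
  move=> [[i j1] j2] [[i' j1'] j2'] /= [].
  have /andP [a1 a2] := nthlt i; have /andP [b1 b2] := nthlt i'.
  rewrite !modn_small ?lt1 // => e1 e2.
  have ea : (nth (0,0)%N s i).1 = (nth (0,0)%N s i').1 by rewrite -(modE _ j1 a1) e1 modE.
  have eb : (nth (0,0)%N s i).2 = (nth (0,0)%N s i').2 by rewrite -(modE _ j2 a2) e2 modE.
  have ej1 : j1 = j1' :> nat by rewrite -(divE _ j1 a1) e1 divE.
  have ej2 : j2 = j2' :> nat by rewrite -(divE _ j2 a2) e2 divE.
  have ei : i = i' :> nat.
    apply/eqP; rewrite -(nth_uniq (0,0)%N _ _ us) //.
    by apply/eqP; move: ea eb; case: (nth _ s i) => x y; case: (nth _ s i') => x' y' /= -> ->.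
  by congr (_, _, _); apply: val_inj.
have sub : f @: [set: 'I_(size s) * 'I_K * 'I_K] \subset S.
  apply/fintype.subsetP => y /imsetP [[[i j1] j2] _ ->].
  have /andP [a1 a2] := nthlt i.
  apply: (hS (nth (0,0)%N s i) j1 j2); [exact: mem_nth | exact: ltn_ord | exact: ltn_ord | |];
  by rewrite /= modn_small ?lt1.
have := subset_leq_card sub.
by rewrite card_imset // cardsT !card_prod !card_ord.
Qed.

Lemma Rstar_mem (D : int) p (x : 'I_(modl p 1) * 'I_(modl p 1)) :
  inR D p 1 (x.1 : nat)%:Z (x.2 : nat)%:Z -> x \in Rstar D p 1.
Proof. by move=> h; rewrite inE h. Qed.

Lemma Rstar_lb5 (p : nat) (d : int) : prime p -> (3 < p)%N -> ~~ (p%:Z %| d)%Z ->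
  (2 * p ^ 16 <= #|Rstar (p%:Z * d) p 1|)%N.
Proof.
move=> pp p3 hd.
have [k hk] : exists k, p = (2 * k + 5)%N.
  case: (even_prime pp) => [p2|podd]; first by rewrite p2 in p3.
  exists (p./2 - 2)%N; have := odd_double_half p; rewrite podd /=; lia.
have hM : modl p 1 = (p * p ^ 8)%N by rewrite /modl (_ : (8 * 1 + 1 = 9)%N) // expnS.
have := @count_lb (modl p 1) p (p ^ 8) [:: (1, k+2); (k+2, 1)]%N (Rstar (p%:Z * d) p 1) hM.
rewrite /= -mulnA -expnD /=; apply.
- by rewrite andbT inE; apply/eqP => -[]; lia.
- rewrite !andbT; apply/and3P; split; lia.
- move=> ab j1 j2; rewrite !inE => /orP [] /eqP -> _ _ x /= e1 e2; apply: Rstar_mem.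
    by rewrite e1 e2 !PoszD !PoszM; apply: cls5.
  apply: inR_sym; rewrite e1 e2 !PoszD !PoszM; apply: cls5 => //.
Qed.

Lemma Rstar_lb3 (d : int) : ~~ (3%:Z %| d)%Z ->
  (6 * 3 ^ 7 * 3 ^ 7 <= #|Rstar (3%:Z * d) 3 1|)%N.
Proof.
move=> hd.
have hM : modl 3 1 = (9 * 3 ^ 7)%N by rewrite /modl (_ : 9 = 3 ^ 2)%N // -expnD.
have := @count_lb (modl 3 1) 9 (3 ^ 7) [:: (3, 6); (6, 3); (1, 7); (7, 1); (4, 7); (7, 4)]%N
   (Rstar (3%:Z * d) 3 1) hM.
apply => //.
move=> ab j1 j2 hab _ _ x e1 e2; apply: Rstar_mem.
rewrite e1 e2 (PoszD ab.1 (9 * j1)) (PoszM 9 j1) (PoszD ab.2 (9 * j2)) (PoszM 9 j2).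
case: ab hab {e1 e2} => a b hab /=.
exact: cls3.
Qed.

Lemma frac_le (R : realType) (c x N y : nat) : (0 < x)%N -> (0 < y)%N -> (c * y <= N * x)%N ->
  (c%:R / x%:R <= N%:R / y%:R :> R).
Proof.
move=> x0 y0 h.
rewrite ler_pdivrMr ?ltr0n // mulrAC ler_pdivlMr ?ltr0n // -!natrM ler_nat //.
Qed.

Definition cfac (R : realType) (p : nat) : R := if p == 3%N then 2^-1 else 2.

Lemma loc_ge (R : realType) (D : int) (p : nat) : prime p -> (2 < p)%N -> (p %| `|D|)%N ->
  squarefree D -> ((cfac R p / (p ^ 2)%:R : R)%:E <= local_sum R D p)%E.
Proof.
move=> pp p2 pD [D0 sqf].
have pDz : (p%:Z %| D)%Z by rewrite dvdzE.
set d := (D %/ p%:Z)%Z.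
have eD : D = p%:Z * d by move: pDz; rewrite dvdz_eq mulrC => /eqP.
have hd : ~~ (p%:Z %| d)%Z.
  apply: contra (sqf p pp); rewrite dvdzE eD abszM /= => h.
  by rewrite expnS expn1 dvdn_mul.
rewrite /local_sum.
apply: le_trans (nneseries_lim_ge 2 _); last by move=> n _ _; rewrite lee_fin divr_ge0.
rewrite big_nat1 lee_fin.
rewrite /cfac; case: eqP => [p3|np3].
- subst p.
  have := Rstar_lb3 hd; rewrite -eD => hN.
  rewrite (_ : (2^-1 : R) / (3 ^ 2)%:R = 1%:R / (2 * 3 ^ 2)%N%:R); last first.
    by rewrite natrM invfM mul1r mulrC.
  apply: frac_le => //.
  rewrite mul1n (_ : 2 * (8 * 1 + 1) = 7 + 7 + 4)%N // !expnD.
  move: hN; set t := (3 ^ 7)%N; set N := #|_|; nia.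
- have p3 : (3 < p)%N by lia.
  have := Rstar_lb5 pp p3 hd; rewrite -eD => hN.
  rewrite (_ : (2 : R) = 2%N%:R) //; apply: frac_le; rewrite ?expn_gt0 ?prime_gt0 //.
  rewrite (_ : 2 * (8 * 1 + 1) = 16 + 2)%N // expnD mulnA leq_mul2r hN orbT //.
Qed.
Lemma prod_primes_sqf (n : nat) : (0 < n)%N -> (forall p, prime p -> ~~ (p ^ 2 %| n)%N) ->
  (\prod_(p <- primes n) p)%N = n.
Proof.
move=> n0 sq.
rewrite {2}(prod_prime_decomp n0) prime_decompE big_map /=.
apply: eq_big_seq => p hp.
have pp : prime p by move: hp; rewrite mem_primes => /andP [].
have l1 : (0 < logn p n)%N by rewrite logn_gt0.
have l2 : (logn p n < 2)%N.
  by rewrite ltnNge -pfactor_dvdn //; apply: sq.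
by have -> : logn p n = 1%N by lia.
Qed.

Lemma odd_D (D : int) : (D = 1 %[mod 8])%Z -> ~~ (2 %| `|D|)%N.
Proof.
move=> h; apply/negP => h2.
have h2z : (2%:Z %| D)%Z by rewrite dvdzE.
have e : D = (D %/ 8)%Z * 8 + 1 by rewrite {1}(divz_eq D 8) h.
have : (2%:Z %| (1)%R)%Z.
  rewrite (_ : 1 = D - (D %/ 8)%Z * 4 * 2); last by rewrite {1}e; ring.
  by apply: rpredB => //; apply: dvdz_mull.
by [].
Qed.

Lemma prod_le (R : realType) (s : seq nat) (f g : nat -> \bar R) :
  (forall p, p \in s -> (0 <= f p)%E /\ (f p <= g p)%E) ->
  (0 <= \prod_(p <- s) f p)%E /\ (\prod_(p <- s) f p <= \prod_(p <- s) g p)%E.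
Proof.
elim: s => [|a s IH] h; first by rewrite !big_nil.
have [ha1 ha2] := h a (mem_head _ _).
have [hs1 hs2] : (0 <= \prod_(p <- s) f p)%E /\ (\prod_(p <- s) f p <= \prod_(p <- s) g p)%E.
  by apply: IH => p ps; apply: h; rewrite inE ps orbT.
rewrite !big_cons; split; first exact: mule_ge0.
exact: lee_pmul.
Qed.

Lemma cfac_prod (R : realType) (s : seq nat) : uniq s ->
  (3%N \in s -> exists2 q, q \in s & q != 3%N) -> 1 <= \prod_(p <- s) cfac R p.
Proof.
move=> us H.
have ge1 : forall t : seq nat, 3%N \notin t -> 1 <= \prod_(p <- t) cfac R p.
  elim => [|a t IH] ht; first by rewrite big_nil.
  rewrite big_cons; move: ht; rewrite inE negb_or => /andP [a3 t3].
  rewrite /cfac eq_sym (negbTE a3); apply: mulr_ege1; last exact: IH.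
  by rewrite ler1n.
case: (boolP (3%N \in s)) => h3; last exact: ge1.
have [q qs q3] := H h3.
rewrite (perm_big _ (perm_to_rem h3)) big_cons.
have qr : q \in rem 3%N s by rewrite (mem_rem_uniq _ us) inE q3 qs.
rewrite (perm_big _ (perm_to_rem qr)) big_cons.
rewrite {1 2}/cfac eqxx (negbTE q3).
change (1 <= 2^-1 * (2 * \prod_(j <- rem q (rem 3%N s)) cfac R j)).
rewrite mulrA mulVf ?pnatr_eq0 // mul1r; apply: ge1.
apply/negP => /mem_rem; rewrite (mem_rem_uniq _ us) inE eqxx //.
Qed.

Lemma other_prime (D : int) : squarefree D -> (D = 1 %[mod 8])%Z -> 3%N \in primes `|D| ->
  exists2 q, q \in primes `|D| & q != 3%N.
Proof.
move=> [D0 sq] h8 h3.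
case: (boolP (has (fun q => q != 3%N) (primes `|D|))) => [/hasP [q qs q3]|hn]; first by exists q.
exfalso.
have D0' : (0 < `|D|)%N by rewrite absz_gt0.
have eD := prod_primes_sqf D0' sq.
have al : all (fun q => q == 3%N) (primes `|D|).
  by apply/allP => q qs; apply: contraNT hn => q3; apply/hasP; exists q.
have s1 : primes `|D| = [:: 3%N].
  move: (primes_uniq `|D|) al h3; case: (primes `|D|) => [|a [|b t]] //=.
  - by move=> _ /andP [/eqP -> _].
  - move=> /and3P [ab _ _] /and3P [/eqP ea /eqP eb _].
    by rewrite ea eb inE eqxx in ab.
rewrite s1 big_seq1 in eD.
have : D = 3 \/ D = - 3 by lia.
by case => eD3; move: h8; rewrite eD3.
Qed.

Theorem lemma2p5 (R : realType) (D : int) :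
  squarefree D ->
  ~ (exists m : int, D = m ^+ 2) ->
  (D = 1 %[mod 8])%Z ->
  ((4 / (D%:~R) ^+ 2 : R)%:E <= c_loc R D)%E.
Proof.
move=> sqf _ h8.
have [D0 sq] := sqf.
have D0' : (0 < `|D|)%N by rewrite absz_gt0.
have hp : forall p, p \in primes `|D| -> [/\ prime p, (2 < p)%N & (p %| `|D|)%N].
  move=> p; rewrite mem_primes => /and3P [pp _ pD]; split => //.
  have p1 := prime_gt1 pp; case: (ltngtP p 2) => [pl|//|p2]; first lia.
  by move: pD (odd_D h8); rewrite p2 => ->.
have Hprod := @prod_le R (primes `|D|) (fun p => (cfac R p / (p ^ 2)%:R)%:E) (local_sum R D).
have [H1 H2] : (0 <= \prod_(p <- primes `|D|) (cfac R p / (p ^ 2)%:R)%:E)%E /\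
    (\prod_(p <- primes `|D|) (cfac R p / (p ^ 2)%:R)%:E <= \prod_(p <- primes `|D|) local_sum R D p)%E.
  apply: Hprod => p ps; have [pp p2 pD] := hp p ps; split.
    by rewrite lee_fin divr_ge0 // /cfac; case: ifP.
  exact: loc_ge.
rewrite /c_loc; apply: (@le_trans _ _ (4%:E * \prod_(p <- primes `|D|) (cfac R p / (p ^ 2)%:R)%:E)%E); last first.
  by apply: lee_pmul.
rewrite prodEFin -EFinM lee_fin.
have C1 : 1 <= \prod_(p <- primes `|D|) cfac R p.
  apply: cfac_prod; first exact: primes_uniq.
  exact: other_prime.
have eX : \prod_(p <- primes `|D|) ((p ^ 2)%:R : R) = D%:~R ^+ 2.
  rewrite (eq_bigr (fun p => (p%:R : R) ^+ 2)); last by move=> p _; rewrite natrX.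
  rewrite prodrXl -natr_prod prod_primes_sqf // natr_absz intr_norm real_normK //.
rewrite big_split /= prodfV eX mulrA.
apply: ler_wpM2r; first by rewrite invr_ge0 sqr_ge0.
by apply: ler_peMr.
Qed.
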